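(* Suppose $x\in X\subseteq\{1,\dots,n\}$ and $\delta$ is invertible in $R$. Then the left $\mathcal P_n$-module $\mathcal A_{X,x}$ is a direct summand of $\mathcal P_n/J_{X-\{x\}}$.
   Context: $R$ is a commutative ring, $\delta\in R$, and $\mathcal P_n=\mathcal P_n(R,\delta)$ is the partition algebra: the free $R$-module on set partitions (''diagrams'') of $\{-n,\dots,-1,1,\dots,n\}$ (negative = left nodes, positive = right nodes), with product by stacking, taking the induced partition on outer nodes, and multiplying by $\delta$ for each component consisting only of middle nodes. For $Z\subseteq\{1,\dots,n\}$, $J_Z$ is the left ideal spanned by diagrams in which among the right nodes labelled by $Z$ there is a singleton block or two distinct nodes in the same block. $A_x$ is the left submodule spanned by diagrams in which the right node $x$ is a singleton, and $\mathcal A_{X,x}=A_x/(A_x\cap J_{X-\{x\}})$, a submodule of $\mathcal P_n/J_{X-\{x\}}$. *)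

(* Defs.v *)
From HB Require Import structures.
From mathcomp Require Import all_boot all_algebra.
Set Implicit Arguments. Unset Strict Implicit. Unset Printing Implicit Defensive.
Import GRing.Theory.
Local Open Scope ring_scope.

(* Nodes of a partition diagram on {-n..-1,1..n}:
   (false, i) is the left node -(i+1), (true, i) is the right node i+1. *)
Definition node (n : nat) := (bool * 'I_n)%type.

Definition diagram (n : nat) :=
  {P : {set {set node n}} | partition P [set: node n]}.

(* Stacking a (left) on d (right): three layers of nodes,
   Some false = left nodes of a, None = middle (right of a = left of d),
   Some true = right nodes of d. *)
Definition lay (n : nat) := (option bool * 'I_n)%type.

Section Stack.
Variable n : nat.
Implicit Types (a d : diagram n).

Definition embL (u : node n) : lay n := (if u.1 then None else Some false, u.2).
Definition embR (u : node n) : lay n := (if u.1 then Some true else None, u.2).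
Definition outer (u : node n) : lay n := (Some u.1, u.2).

Definition stack_edge a d : rel (lay n) := fun p q =>
  [exists u : node n, exists v : node n,
     [&& embL u == p, embL v == q & pblock (val a) u == pblock (val a) v]] ||
  [exists u : node n, exists v : node n,
     [&& embR u == p, embR v == q & pblock (val d) u == pblock (val d) v]].

Definition stack_classes a d : {set {set lay n}} :=
  equivalence_partition (connect (stack_edge a d)) [set: lay n].

Definition comp_set a d : {set {set node n}} :=
  [set [set u : node n | outer u \in C] | C : {set lay n} in stack_classes a d] :\ set0.

Definition n_middle a d : nat :=
  #|[set C in stack_classes a d | C \subset [set p : lay n | p.1 == None]]|.

Lemma stack_edge_sym a d : symmetric (stack_edge a d).
Proof.
move=> p q; rewrite /stack_edge.
suff H : forall (f : node n -> lay n) (P : {set {set node n}}),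
  [exists u, exists v, [&& f u == p, f v == q & pblock P u == pblock P v]] =
  [exists u, exists v, [&& f u == q, f v == p & pblock P u == pblock P v]].
  by rewrite H [X in _ || X]H.
move=> f P; apply/existsP/existsP=> -[u /existsP[v /and3P[h1 h2 h3]]];
  by exists v; apply/existsP; exists u; rewrite h1 h2 eq_sym h3.
Qed.

Lemma stack_classesP a d : partition (stack_classes a d) [set: lay n].
Proof.
apply: equivalence_partitionP => x y z _ _ _.
have cs := sym_connect_sym (@stack_edge_sym a d).
split; first exact: connect0.
move=> cxy; apply/idP/idP => h.
  by apply: connect_trans h; rewrite cs.
exact: connect_trans cxy h.
Qed.

Lemma comp_setP a d : partition (comp_set a d) [set: node n].
Proof.
have /and3P[/eqP covP triP nP0] := stack_classesP a d.
apply/and3P; split.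
- rewrite eqEsubset subsetT /=; apply/subsetP=> u _.
  have Pu : outer u \in cover (stack_classes a d) by rewrite covP inE.
  apply/bigcupP; exists [set w : node n | outer w \in pblock (stack_classes a d) (outer u)].
    rewrite !inE; apply/andP; split.
      by apply/eqP/setP => /(_ u); rewrite !inE mem_pblock Pu.
    by apply/imsetP; exists (pblock (stack_classes a d) (outer u)) => //; apply: pblock_mem.
  by rewrite inE mem_pblock.
- apply/trivIsetP => A B /setD1P[_ /imsetP[C PC ->]] /setD1P[_ /imsetP[C' PC' ->]] nAB.
  rewrite -setI_eq0; apply/eqP/setP => u; rewrite !inE.
  apply/negP => /andP[uC uC']; move/negP: nAB; apply.
  by rewrite -(def_pblock triP PC uC) -(def_pblock triP PC' uC').
- by rewrite !inE eqxx.
Qed.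

Definition comp a d : diagram n := Sub (comp_set a d) (comp_setP a d).
End Stack.

Notation Pn R n := {ffun diagram n -> R^o}.

Definition pmul (R : comPzRingType) (delta : R) (n : nat) (f g : Pn R n) : Pn R n :=
  [ffun d => \sum_(d1 : diagram n) \sum_(d2 : diagram n | comp d1 d2 == d)
                f d1 * g d2 * delta ^+ n_middle d1 d2].

Definition right_singleton n (d : diagram n) (z : 'I_n) : bool :=
  [set (true, z)] \in val d.

Definition badZ n (Z : {set 'I_n}) (d : diagram n) : bool :=
  [exists z in Z, right_singleton d z] ||
  [exists z1 in Z, exists z2 in Z,
     (z1 != z2) && (pblock (val d) (true, z1) == pblock (val d) (true, z2))].

(* R-span of a set of basis diagrams = elements supported on it *)
Definition span_of (R : comPzRingType) n (S : pred (diagram n)) (v : Pn R n) : Prop :=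
  forall d, ~~ S d -> v d = 0.

Definition J_ideal (R : comPzRingType) n (Z : {set 'I_n}) : Pn R n -> Prop :=
  span_of (badZ Z).

Definition A_sub (R : comPzRingType) n (x : 'I_n) : Pn R n -> Prop :=
  span_of (fun d => right_singleton d x).

Definition is_left_submodule (R : comPzRingType) (delta : R) n (S : Pn R n -> Prop) : Prop :=
  [/\ S 0,
      (forall u v, S u -> S v -> S (u + v)),
      (forall (r : R) u, S u -> S (r *: u)) &
      (forall a u, S u -> S (pmul delta a u))].

(* Via the correspondence theorem: submodules of P_n / J are submodules of P_n
   containing J.  The image of A_{X,x} = A_x/(A_x \cap J) in P_n / J corresponds
   to A_x + J.  "A_{X,x} is a direct summand of P_n / J" means: there is a
   submodule C of P_n containing J with (A_x + J) + C = P_n and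
   (A_x + J) \cap C = J. *)
Definition direct_summand_mod (R : comPzRingType) (delta : R) n
    (J A : Pn R n -> Prop) : Prop :=
  exists C : Pn R n -> Prop,
    [/\ is_left_submodule delta C,
        (forall v, J v -> C v),
        (forall v, exists a c, [/\ A a, C c & v = a + c]) &
        (forall v, (exists a j, [/\ A a, J j & v = a + j]) -> C v -> J v)].

(* Main.v *)
Require Import Defs.
From mathcomp Require Import all_boot all_algebra.
Local Open Scope ring_scope.
Set Implicit Arguments. Unset Strict Implicit. Unset Printing Implicit Defensive.
Import GRing.Theory.

Section A.
Variable n : nat.
Implicit Types (a d : diagram n).

Lemma dpart d : partition (val d) [set: node n].
Proof. exact: valP d. Qed.

Lemma dtriv d : trivIset (val d).
Proof. by case/and3P: (dpart d). Qed.

Lemma dcov d u : u \in cover (val d).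
Proof. by case/and3P: (dpart d) => /eqP -> _ _; rewrite inE. Qed.

Lemma dmem d u : u \in pblock (val d) u.
Proof. by rewrite mem_pblock dcov. Qed.

Lemma deqE d u v : (pblock (val d) u == pblock (val d) v) = (v \in pblock (val d) u).
Proof. exact: eq_pblock (dtriv d) (dcov d u). Qed.

Lemma part_imset (T : finType) (P : {set {set T}}) :
  partition P [set: T] -> P = [set pblock P u | u in [set: T]].
Proof.
move=> pP; rewrite -{1}(equivalence_partition_pblock pP).
apply: eq_in_imset => u _; apply/setP => v; rewrite !inE /=.
done.
Qed.

Lemma diag_eq d d' : (forall u, pblock (val d) u = pblock (val d') u) -> d = d'.
Proof.
move=> h; apply: val_inj; rewrite (part_imset (dpart d)) (part_imset (dpart d')).
by apply: eq_imset.
Qed.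

Lemma rsingE d z : right_singleton d z = (pblock (val d) (true, z) == [set (true, z)]).
Proof.
rewrite /right_singleton; apply/idP/eqP => [h|<-]; last exact: pblock_mem (dcov d _).
by apply: def_pblock (dtriv d) h _; rewrite inE.
Qed.
End A.


Section B.
Variable n : nat.
Implicit Types (a d : diagram n).

Lemma G_sym a d : connect_sym (stack_edge a d).
Proof. exact: sym_connect_sym (@stack_edge_sym n a d). Qed.

Lemma classes_pblock a d q r :
  (r \in pblock (stack_classes a d) q) = connect (stack_edge a d) q r.
Proof.
rewrite /stack_classes pblock_equivalence_partition ?inE //.
move=> x y z _ _ _; split; first exact: connect0.
move=> cxy; apply/idP/idP => h.
  by apply: connect_trans h; rewrite G_sym.
exact: connect_trans cxy h.
Qed.

Lemma comp_pblock a d u :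
  pblock (val (Defs.comp a d)) u = [set v | connect (stack_edge a d) (outer u) (outer v)].
Proof.
apply: def_pblock; first by case/and3P: (comp_setP a d).
  rewrite /= /comp_set !inE; apply/andP; split.
    by apply/eqP/setP => /(_ u); rewrite !inE connect0.
  apply/imsetP; exists (pblock (stack_classes a d) (outer u)).
    by apply: pblock_mem; case/and3P: (stack_classesP a d) => /eqP -> _ _; rewrite inE.
  by apply/setP => v; rewrite !inE classes_pblock.
by rewrite inE connect0.
Qed.

Lemma comp_memE a d u v :
  (v \in pblock (val (Defs.comp a d)) u) = connect (stack_edge a d) (outer u) (outer v).
Proof. by rewrite comp_pblock inE. Qed.

Lemma n_middleE a d : n_middle a d =
  #|[set C in [set [set r | connect (stack_edge a d) q r] | q in [set: lay n]]
      | C \subset [set p : lay n | p.1 == None]]|.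
Proof.
rewrite /n_middle; apply: eq_card => C; rewrite !inE; congr (_ && _).
rewrite {1}(part_imset (stack_classesP a d)).
suff -> : [set pblock (stack_classes a d) u | u in [set: lay n]] =
  [set [set r | connect (stack_edge a d) q r] | q in [set: lay n]] by [].
apply: eq_in_imset => q _; apply/setP => r; by rewrite classes_pblock inE.
Qed.

Lemma embR_inj : injective (@embR n).
Proof. by move=> [[] i] [[] j]; rewrite /embR /= => h; congruence. Qed.
Lemma outer_inj : injective (@outer n).
Proof. by move=> [b i] [c j]; rewrite /outer /= => h; congruence. Qed.

Lemma stack_edgeE a d p q : stack_edge a d p q =
  [exists u, exists v, [&& embL u == p, embL v == q & pblock (val a) u == pblock (val a) v]] ||
  [exists u, exists v, [&& embR u == p, embR v == q & pblock (val d) u == pblock (val d) v]].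
Proof. by []. Qed.

Lemma embL_true u i : embL u != (Some true, i) :> lay n.
Proof. by case: u => [[] j]. Qed.

Lemma iso_connect (T : finType) (e : rel T) p q :
  (forall y, e p y -> y = p) -> connect e p q -> q = p.
Proof.
move=> h /connectP[s]; elim: s => [|y s IH] /= ; first by move=> _ ->.
by case/andP => /h -> ps; apply: IH.
Qed.

Lemma edge_Rsing a d z q : right_singleton d z ->
  stack_edge a d (Some true, z) q -> q = (Some true, z).
Proof.
rewrite rsingE => /eqP hs; rewrite stack_edgeE.
case/orP => /existsP[u /existsP[v /and3P[h1 h2 h3]]]; first by rewrite (negbTE (embL_true _ _)) in h1.
move: h1; rewrite -[(Some true, z)]/(embR (true, z)) => /eqP /embR_inj ?; subst u.
move: h3; rewrite deqE hs inE => /eqP ?; subst v; by apply/esym/eqP.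
Qed.

Lemma comp_rsing a d z : right_singleton d z -> right_singleton (Defs.comp a d) z.
Proof.
move=> hs; rewrite rsingE; apply/eqP/setP => v; rewrite comp_memE inE.
apply/idP/eqP => [|->]; last exact: connect0.
move/(iso_connect (fun y => edge_Rsing (a:=a) (q:=y) hs)); case: v => [b j]; rewrite /outer /= => h; congruence.
Qed.

Lemma comp_same a d z1 z2 :
  pblock (val d) (true, z1) == pblock (val d) (true, z2) ->
  pblock (val (Defs.comp a d)) (true, z1) == pblock (val (Defs.comp a d)) (true, z2).
Proof.
move=> h; rewrite deqE comp_memE; apply: connect1; rewrite stack_edgeE; apply/orP; right.
by apply/existsP; exists (true, z1); apply/existsP; exists (true, z2); rewrite !eqxx h.
Qed.

Lemma comp_bad Z a d : badZ Z d -> badZ Z (Defs.comp a d).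
Proof.
rewrite /badZ; case/orP => [/existsP[z /andP[zZ hz]]|/existsP[z1 /andP[z1Z /existsP[z2 /andP[z2Z /andP[ne he]]]]]].
  by apply/orP; left; apply/existsP; exists z; rewrite zZ comp_rsing.
apply/orP; right; apply/existsP; exists z1; rewrite z1Z; apply/existsP; exists z2.
by rewrite z2Z ne comp_same.
Qed.
End B.


Section C.
Variables (n : nat) (x : 'I_n).
Implicit Types (a d : diagram n).
Local Notation xt := ((true, x) : node n).
Local Notation p0 := ((Some true, x) : lay n).

Definition splitr d : rel (node n) := fun u v =>
  (u == v) || [&& u != xt, v != xt & pblock (val d) u == pblock (val d) v].

Lemma splitr_equiv d : {in [set: node n] & &, equivalence_rel (splitr d)}.
Proof.
move=> u v w _ _ _; split; first by rewrite /splitr eqxx.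
rewrite /splitr; case: (eqVneq u v) => [->//|uv] /= /and3P[ux vx /eqP puv].
rewrite ux vx puv /=.
case: (eqVneq u w) => [<-|uw] /=; first by rewrite ux puv eqxx orbT.
by case: (eqVneq v w) => [<-|vw] /=; rewrite ?vx ?eqxx.
Qed.

Definition dsplit d : diagram n :=
  Sub (equivalence_partition (splitr d) [set: node n])
      (equivalence_partitionP (splitr_equiv d)).

Lemma split_mem d u v : (v \in pblock (val (dsplit d)) u) = splitr d u v.
Proof. rewrite /= pblock_equivalence_partition //; first exact: splitr_equiv; exact: in_setT. Qed.

Lemma split_rsing d : right_singleton (dsplit d) x.
Proof.
rewrite rsingE; apply/eqP/setP => v; rewrite split_mem inE /splitr eqxx /=.
by rewrite orbF eq_sym.
Qed.

Lemma split_id d : right_singleton d x -> dsplit d = d.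
Proof.
rewrite rsingE => /eqP hs; apply: diag_eq => u; apply/setP => v.
rewrite split_mem /splitr.
case: (eqVneq u v) => [->|uv] /=; first by rewrite dmem.
case: (eqVneq u xt) => [ux|ux] /=; first by subst u; rewrite hs inE eq_sym (negbTE uv).
case: (eqVneq v xt) => [->|vx] /=.
  by rewrite -deqE eq_sym deqE hs inE (negbTE ux).
by rewrite deqE.
Qed.

Lemma split_bad (Z : {set 'I_n}) d : x \notin Z -> badZ Z d -> badZ Z (dsplit d).
Proof.
move=> xZ; rewrite /badZ.
have nx z : z \in Z -> (true, z) != xt.
  by move=> zZ; apply/eqP => -[ez]; rewrite -ez zZ in xZ.
case/orP => [/existsP[z /andP[zZ hz]]|/existsP[z1 /andP[z1Z /existsP[z2 /andP[z2Z /andP[ne he]]]]]].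
  apply/orP; left; apply/existsP; exists z; rewrite zZ /=.
  move: hz; rewrite !rsingE => /eqP hz; apply/eqP/setP => v.
  rewrite split_mem inE /splitr deqE hz inE (nx _ zZ) /=.
  by case: (eqVneq v (true, z)) => [->|nv]; rewrite ?andbF.
apply/orP; right; apply/existsP; exists z1; rewrite z1Z; apply/existsP; exists z2.
by rewrite z2Z ne deqE split_mem /splitr (nx _ z1Z) (nx _ z2Z) he orbT.
Qed.

Section Stack2.
Variables (d1 d2 : diagram n).
Local Notation G := (stack_edge d1 d2).
Local Notation G' := (stack_edge d1 (dsplit d2)).

Lemma embR_xt : embR xt = p0. Proof. by []. Qed.

Lemma E1 q r : G' q r -> G q r.
Proof.
rewrite !stack_edgeE; case/orP => [->//|/existsP[u /existsP[v /and3P[h1 h2 h3]]]].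
apply/orP; right; apply/existsP; exists u; apply/existsP; exists v; rewrite h1 h2.
move: h3; rewrite deqE split_mem /splitr /=; case/orP => [/eqP->//|/and3P[_ _ ->]//].
Qed.

Lemma E2 q r : G q r -> q != p0 -> r != p0 -> G' q r.
Proof.
rewrite !stack_edgeE; case/orP => [->//|/existsP[u /existsP[v /and3P[h1 h2 h3]]]] qp rp.
apply/orP; right; apply/existsP; exists u; apply/existsP; exists v; rewrite h1 h2.
rewrite deqE split_mem /splitr h3 !andbT; apply/orP; right; apply/andP; split.
  by apply: contraNneq qp => ux; rewrite -(eqP h1) ux.
by apply: contraNneq rp => ux; rewrite -(eqP h2) ux.
Qed.

Lemma E0 r : G' p0 r -> r = p0.
Proof.
rewrite stack_edgeE; case/orP => /existsP[u /existsP[v /and3P[h1 h2 h3]]].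
  by rewrite (negbTE (embL_true _ _)) in h1.
move: h1; rewrite -embR_xt => /eqP /embR_inj ?; subst u.
move: h3; rewrite deqE split_mem /splitr /=; case/orP => [/eqP ev|/and3P[/eqP nx]]; last by exfalso; apply: nx.
by rewrite -(eqP h2) -ev.
Qed.

Lemma E3 r : G p0 r -> exists v, r = embR v /\ pblock (val d2) v == pblock (val d2) xt.
Proof.
rewrite stack_edgeE; case/orP => /existsP[u /existsP[v /and3P[h1 h2 h3]]].
  by rewrite (negbTE (embL_true _ _)) in h1.
move: h1; rewrite -embR_xt => /eqP /embR_inj ?; subst u.
by exists v; rewrite (eqP h2) eq_sym h3.
Qed.

Lemma iso' r : connect G' p0 r -> r = p0.
Proof. exact: iso_connect E0. Qed.

Lemma claim q r : q != p0 -> r != p0 -> connect G q r -> connect G' q r.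
Proof.
move=> qp rp cqr.
pose a := [pred r | if r == p0 then [exists v, [&& v != xt, pblock (val d2) v == pblock (val d2) xt & connect G' q (embR v)]] else connect G' q r].
have cl : closed G a.
  apply: intro_closed; first exact: G_sym.
  move=> y z e; rewrite !inE.
  case: (eqVneq z p0) => [zp|zp]; case: (eqVneq y p0) => [yp|yp] //.
  - move=> cy; subst z.
    have [v [yv hv]] : exists v, y = embR v /\ pblock (val d2) v == pblock (val d2) xt.
      by apply: E3; rewrite stack_edge_sym.
    apply/existsP; exists v; rewrite hv -yv cy andbT.
    rewrite andbT; apply: contraNneq yp => vx; apply/eqP; by rewrite yv vx.
  - subst y; case/existsP => v /and3P[vx hv cv].
    have [w [zw hw]] := E3 e.
    apply: connect_trans cv _; apply: connect1; rewrite stack_edgeE; apply/orP; right.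
    apply/existsP; exists v; apply/existsP; exists w; rewrite zw !eqxx.
    rewrite deqE split_mem /splitr vx /=; apply/orP; right; apply/andP; split; last by apply/eqP; rewrite (eqP hv) (eqP hw).
    by apply: contraNneq zp => wx; rewrite zw wx.
  - by move=> cy; apply: connect_trans cy (connect1 (E2 e yp zp)).
have := closed_connect cl cqr; rewrite !inE (negbTE qp) (negbTE rp) connect0.
by move=> h; rewrite -h.
Qed.

Lemma comp_split : Defs.comp d1 (dsplit d2) = dsplit (Defs.comp d1 d2).
Proof.
apply: diag_eq => u; apply/setP => v.
rewrite comp_memE split_mem /splitr deqE comp_memE.
case: (eqVneq u v) => [->|uv] /=; first by rewrite connect0.
case: (eqVneq u xt) => [ux|ux] /=.
  subst u; apply/negbTE/negP => /iso' ev.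
  have ev' : v = xt by apply: (@outer_inj n); rewrite ev.
  by rewrite ev' eqxx in uv.
case: (eqVneq v xt) => [vx|vx] /=.
  subst v; apply/negbTE/negP; rewrite G_sym => /iso' eu.
  have eu' : u = xt by apply: (@outer_inj n); rewrite eu.
  by rewrite eu' eqxx in ux.
apply/idP/idP.
  by apply: connect_sub => q r /E1; apply: connect1.
apply: claim.
  by apply: contraNneq ux => eu; apply/eqP; apply: (@outer_inj n); rewrite eu.
by apply: contraNneq vx => eu; apply/eqP; apply: (@outer_inj n); rewrite eu.
Qed.

End Stack2.
End C.


Lemma card_mid (T : finType) (cl cl' : T -> {set T}) (p0 : T) (mid : {set T}) :
  p0 \notin mid ->
  (forall q, q \in cl q) ->
  cl' p0 = [set p0] ->
  (forall q, q != p0 -> cl' q = cl q :\ p0) ->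
  (forall q r, r \in cl q -> cl r = cl q) ->
  #|[set C in [set cl' q | q in [set: T]] | C \subset mid]| =
  (#|[set C in [set cl q | q in [set: T]] | C \subset mid]|
     + ((cl p0 :\ p0 != set0) && (cl p0 :\ p0 \subset mid)))%N.
Proof.
move=> p0_mid cl0 F1 F2 F3.
set K := cl p0.
set b := (_ && _).
set M := [set C in [set cl q | q in [set: T]] | C \subset mid].
set M' := [set C in [set cl' q | q in [set: T]] | C \subset mid].
have notM : b -> K :\ p0 \notin M.
  move=> _; apply/negP; rewrite inE => /andP[/imsetP[q _ eq] _].
  have qin : q \in K :\ p0 by rewrite eq cl0.
  have qK : q \in K by move: qin; rewrite !inE => /andP[].
  have : p0 \in cl q by rewrite (F3 p0 q qK) cl0.
  by rewrite -eq !inE eqxx.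
have key C : (C \in M') = ((b && (C == K :\ p0)) || (C \in M)).
  rewrite !inE; apply/idP/idP.
    case/andP => /imsetP[q _ ->] sub.
    case: (eqVneq q p0) => [qp|qp].
      by subst q; move: sub; rewrite F1 sub1set (negbTE p0_mid).
    rewrite F2 // in sub *.
    case: (boolP (p0 \in cl q)) => pq.
      have eK : cl q = K by rewrite /K (F3 q p0 pq).
      rewrite eK eqxx andbT; apply/orP; left; rewrite /b -eK sub andbT.
      by apply/set0Pn; exists q; rewrite !inE qp cl0.
    have e : cl q :\ p0 = cl q.
      apply/setP => r; rewrite !inE; case: (eqVneq r p0) => // ->.
      by rewrite (negbTE pq).
    rewrite e in sub *; apply/orP; right; rewrite sub andbT; apply/imsetP; by exists q.
  case/orP => [/andP[bt /eqP ->]|/andP[/imsetP[q _ ->] sub]].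
    move: (bt); rewrite /b => /andP[/set0Pn[q qin] sub]; rewrite sub andbT.
    move: (qin); rewrite !inE => /andP[qp cq].
    apply/imsetP; exists q => //; rewrite F2 // (F3 p0 q) //.
  rewrite sub andbT; apply/imsetP; exists q => //.
  have qp : q != p0.
    apply: contraTneq sub => ->; apply/negP => /subsetP /(_ p0 (cl0 p0)).
    by rewrite (negbTE p0_mid).
  rewrite F2 //; apply/setP => r; rewrite !inE; case: (eqVneq r p0) => [->|] //=.
  case pc: (p0 \in cl q) => //; move/subsetP: sub => /(_ p0 pc).
  by rewrite (negbTE p0_mid).
case: (boolP b) => hb.
  have -> : M' = (K :\ p0) |: M by apply/setP => C; rewrite key in_setU1 hb.
  by rewrite cardsU1 (notM hb) addnC.
have -> : M' = M by apply/setP => C; rewrite key (negbTE hb).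
by rewrite addn0.
Qed.

Lemma other_mem n (d : diagram n) u : pblock (val d) u != [set u] ->
  exists2 w, w \in pblock (val d) u & w != u.
Proof.
move=> h; case: (pickP [pred w | (w \in pblock (val d) u) && (w != u)]) => [w /andP[]|none].
  by exists w.
exfalso; apply: (negP h); apply/eqP/setP => w; rewrite inE; apply/idP/eqP => [hw|->].
  by have := none w; rewrite /= hw /= => /negbT; rewrite negbK => /eqP.
exact: dmem.
Qed.

Section D.
Variables (n : nat) (x : 'I_n) (d1 d2 : diagram n).
Local Notation xt := ((true, x) : node n).
Local Notation p0 := ((Some true, x) : lay n).
Local Notation G := (stack_edge d1 d2).
Local Notation G' := (stack_edge d1 (dsplit x d2)).
Local Notation mid := [set p : lay n | p.1 == None].
Local Notation K := [set r | connect G p0 r].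

Lemma middleE : n_middle d1 (dsplit x d2) =
   (n_middle d1 d2 + ((K :\ p0 != set0) && (K :\ p0 \subset mid)))%N.
Proof.
rewrite !n_middleE.
apply: (@card_mid _ (fun q => [set r | connect G q r]) (fun q => [set r | connect G' q r])).
- by rewrite inE.
- by move=> q; rewrite inE connect0.
- apply/setP => r; rewrite !inE; apply/idP/eqP => [/iso'->//|->]; exact: connect0.
- move=> q qp; apply/setP => r; rewrite !inE.
  case: (eqVneq r p0) => [->|rp] /=.
    apply: negbTE; apply/negP; rewrite G_sym => /iso' eq; by rewrite eq eqxx in qp.
  apply/idP/idP; last exact: claim.
  by apply: connect_sub => y z /E1; apply: connect1.
- move=> q r; rewrite inE => cqr; apply/setP => s; rewrite !inE; apply/idP/idP => h.
    exact: connect_trans cqr h.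
  by apply: connect_trans h; rewrite G_sym.
Qed.

Lemma b_true : ~~ right_singleton d2 x -> right_singleton (Defs.comp d1 d2) x ->
  ((K :\ p0 != set0) && (K :\ p0 \subset mid)) = true.
Proof.
rewrite !rsingE => hs2 hc.
have hK v : connect G p0 (outer v) -> v = xt.
  move=> c; have : v \in pblock (val (Defs.comp d1 d2)) xt by rewrite comp_memE.
  by rewrite (eqP hc) inE => /eqP.
apply/andP; split.
  have [w win wx] := other_mem hs2.
  apply/set0Pn; exists (embR w); rewrite !inE; apply/andP; split.
    by apply: contraNneq wx => e; apply/eqP; apply: embR_inj; rewrite e.
  apply: connect1; rewrite stack_edgeE; apply/orP; right.
  apply/existsP; exists xt; apply/existsP; exists w.
  by rewrite !eqxx deqE win.
apply/subsetP => r; rewrite !inE => /andP[rp c].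
move: r rp c => [[b|] i] rp c //=.
have := hK (b, i) c => -[eb ei]; subst b i.
by rewrite eqxx in rp.
Qed.

Lemma b_false : ~~ right_singleton (Defs.comp d1 d2) x ->
  ((K :\ p0 != set0) && (K :\ p0 \subset mid)) = false.
Proof.
rewrite !rsingE => hc.
have [v vin vx] := other_mem hc.
move: vin; rewrite comp_memE => c.
apply: negbTE; apply/negP => /andP[_ /subsetP /(_ (outer v))].
rewrite !inE c andbT /=.
have -> : (outer v != p0) by apply: contraNneq vx => e; apply/eqP; apply: (@outer_inj n); rewrite e.
by move/(_ isT).
Qed.
End D.


Section E.
Variables (R : comPzRingType) (n : nat).
Implicit Types (u v w : Pn R n).

Lemma ffD u v d : (u + v) d = u d + v d. Proof. by rewrite ffunE. Qed.
Lemma ffN u d : (- u) d = - u d. Proof. by rewrite ffunE. Qed.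
Lemma ffB u v d : (u - v) d = u d - v d. Proof. by rewrite ffD ffN. Qed.
Lemma ffZ (r : R) u d : (r *: u) d = r * u d. Proof. by rewrite ffunE. Qed.
Lemma ff0 d : (0 : Pn R n) d = 0. Proof. by rewrite ffunE. Qed.

Lemma span0 (S : pred (diagram n)) : span_of S (0 : Pn R n).
Proof. by move=> d _; rewrite ff0. Qed.
Lemma spanD (S : pred (diagram n)) u v : span_of S u -> span_of S v -> span_of S (u + v).
Proof. by move=> hu hv d hd; rewrite ffD hu // hv // addr0. Qed.
Lemma spanB (S : pred (diagram n)) u v : span_of S u -> span_of S v -> span_of S (u - v).
Proof. by move=> hu hv d hd; rewrite ffB hu // hv // subr0. Qed.
Lemma spanZ (S : pred (diagram n)) r u : span_of S u -> span_of S (r *: u).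
Proof. by move=> hu d hd; rewrite ffZ hu // mulr0. Qed.

Lemma sum_pick (I : finType) (P : pred I) (g : I) (F : I -> R) :
  \sum_(e | P e) (if g == e then F e else 0) = if P g then F g else 0.
Proof.
rewrite -big_mkcondr; case: ifP => Pg.
  rewrite (big_pred1 g) // => e /=; rewrite [g == e]eq_sym.
  by case: (eqVneq e g) => [->|ne]; rewrite ?Pg ?andbF ?andbT.
rewrite big_pred0 // => e; case: (eqVneq g e) => [<-|ne]; by rewrite ?Pg ?andbF.
Qed.
End E.

Section F.
Variables (R : comPzRingType) (delta dinv : R) (hd : delta * dinv = 1) (n : nat) (x : 'I_n).
Implicit Types (u v w : Pn R n).

Definition cf (d : diagram n) : R := if right_singleton d x then 1 else dinv.

Definition phi v : Pn R n := [ffun d => \sum_(d' | dsplit x d' == d) cf d' * v d'].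

Lemma coef d1 d2 : cf (Defs.comp d1 d2) * delta ^+ n_middle d1 d2 =
  cf d2 * delta ^+ n_middle d1 (dsplit x d2).
Proof.
rewrite /cf; case: (boolP (right_singleton d2 x)) => s2.
  by rewrite split_id // comp_rsing.
case: (boolP (right_singleton (Defs.comp d1 d2) x)) => sc.
  by rewrite middleE b_true // addn1 exprS mul1r mulrA [dinv * _]mulrC hd mul1r.
by rewrite middleE b_false // addn0.
Qed.

Lemma arith (A V C1 C2 E1 E2 : R) : C1 * E1 = C2 * E2 -> C1 * (A * V * E1) = A * (C2 * V) * E2.
Proof.
move=> h; rewrite [C1 * _]mulrC -!mulrA; congr (_ * _).
rewrite [RHS]mulrCA; congr (_ * _).
by rewrite mulrC h.
Qed.

Lemma phi_pmul a v : phi (pmul delta a v) = pmul delta a (phi v).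
Proof.
apply/ffunP => d; rewrite !ffunE.
transitivity (\sum_d1 \sum_d2 (if dsplit x (Defs.comp d1 d2) == d then
   cf (Defs.comp d1 d2) * (a d1 * v d2 * delta ^+ n_middle d1 d2) else 0)).
  under eq_bigr => e _ do rewrite ffunE big_distrr.
  rewrite exchange_big /=; apply: eq_bigr => d1 _.
  under eq_bigr => e _ do rewrite big_distrr /= big_mkcond /=.
  rewrite exchange_big /=; apply: eq_bigr => d2 _.
  by rewrite (sum_pick (fun i => dsplit x i == d) (Defs.comp d1 d2) (fun i => cf i * (a d1 * v d2 * delta ^+ n_middle d1 d2))).
symmetry.
transitivity (\sum_d1 \sum_d2 (if Defs.comp d1 (dsplit x d2) == d then
   a d1 * (cf d2 * v d2) * delta ^+ n_middle d1 (dsplit x d2) else 0)).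
  apply: eq_bigr => d1 _.
  under eq_bigr => e _ do rewrite ffunE big_distrr big_distrl /= big_mkcond /=.
  rewrite exchange_big /=; apply: eq_bigr => d2 _.
  by rewrite (sum_pick (fun i => Defs.comp d1 i == d) (dsplit x d2) (fun i => a d1 * (cf d2 * v d2) * delta ^+ n_middle d1 i)).
apply: eq_bigr => d1 _; apply: eq_bigr => d2 _.
rewrite comp_split; case: ifP => // _.
have h := coef d1 d2.
symmetry; exact: (arith (a d1) (v d2) h).
Qed.

Lemma phiD u v : phi (u + v) = phi u + phi v.
Proof.
apply/ffunP => d; rewrite ffD !ffunE -big_split /=; apply: eq_bigr => e _.
by rewrite ffD mulrDr.
Qed.

Lemma phiB u v : phi (u - v) = phi u - phi v.
Proof.
apply/ffunP => d; rewrite ffB !ffunE -sumrB /=; apply: eq_bigr => e _.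
by rewrite ffB mulrBr.
Qed.

Lemma phiZ (r : R) u : phi (r *: u) = r *: phi u.
Proof.
apply/ffunP => d; rewrite ffZ !ffunE big_distrr /=; apply: eq_bigr => e _.
by rewrite ffZ mulrCA.
Qed.

Lemma phi0 : phi 0 = 0.
Proof. by apply/ffunP => d; rewrite ff0 ffunE big1 // => e _; rewrite ff0 mulr0. Qed.

Lemma phi_inA v : A_sub x (phi v).
Proof.
move=> d nd; rewrite ffunE big1 // => e /eqP ed.
by rewrite -ed split_rsing in nd.
Qed.

Lemma phi_idA a : A_sub x a -> phi a = a.
Proof.
move=> ha; apply/ffunP => d; rewrite ffunE.
rewrite (eq_bigr (fun e => if d == e then a e else 0)).
  rewrite (sum_pick (fun e => dsplit x e == d) d a); case: ifP => // /eqP sd.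
  case: (boolP (right_singleton d x)) => he; first by rewrite split_id // eqxx in sd.
  by rewrite ha.
move=> e /eqP ed; case: (boolP (right_singleton e x)) => he.
  by rewrite /cf he mul1r -ed split_id // eqxx.
by rewrite ha // mulr0; case: ifP => // /eqP de; rewrite de ha.
Qed.

Lemma J_left Z a w : J_ideal Z w -> J_ideal Z (pmul delta a w).
Proof.
move=> hw d nd; rewrite ffunE big1 // => d1 _; rewrite big1 // => d2 /eqP ed.
rewrite (hw d2) ?mulr0 ?mul0r //.
by apply: contra nd => h; rewrite -ed comp_bad.
Qed.

Lemma phi_J (Z : {set 'I_n}) v : x \notin Z -> J_ideal Z v -> J_ideal Z (phi v).
Proof.
move=> xZ hv d nd; rewrite ffunE big1 // => e /eqP ed.
rewrite (hv e) ?mulr0 //.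
by apply: contra nd => h; rewrite -ed split_bad.
Qed.
End F.


Unset Implicit Arguments.

Theorem proposition4p7 (R : comPzRingType) (delta : R) (n : nat)
    (X : {set 'I_n}) (x : 'I_n) :
  x \in X -> (exists dinv : R, delta * dinv = 1) ->
  direct_summand_mod delta (J_ideal (R:=R) (X :\ x)) (A_sub (R:=R) x).
Proof.
move=> xX [dinv hd].
have xZ : x \notin X :\ x by rewrite !inE eqxx.
exists (fun v => J_ideal (X :\ x) (phi dinv x v)).
split.
- split.
  + by rewrite phi0; exact: span0.
  + by move=> u v hu hv; rewrite phiD; exact: spanD.
  + by move=> r u hu; rewrite phiZ; exact: spanZ.
  + by move=> a u hu; rewrite (phi_pmul hd); exact: J_left.
- by move=> v hv; exact: phi_J.
- move=> v; exists (phi dinv x v), (v - phi dinv x v); split.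
  + exact: phi_inA.
  + have hA : A_sub x (phi dinv x v) := phi_inA dinv v.
    by rewrite phiB (phi_idA dinv hA) subrr; exact: span0.
  + by rewrite addrC subrK.
- move=> v [a [j [ha hj ->]]] hc.
  have e : a = phi dinv x (a + j) - phi dinv x j by rewrite phiD (phi_idA dinv ha) addrK.
  rewrite {1}e; apply: spanD => //; apply: spanB => //; exact: phi_J.
Qed.
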